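(* Consider a Bayesian network with source $X$ as in the context, and let $W$ be a node and $V$ a set of nodes with $W\notin V$, $W\ne X$ and $W>v$ for all $v\in V$. Then $$\eta_{\mathrm{TV}}(P_{V\cup\{W\}|X})\le(1-\eta_W)\,\eta_{\mathrm{TV}}(P_{V|X})+\eta_W\,\eta_{\mathrm{TV}}(P_{V\cup\mathrm{pa}(W)|X}),$$ where $\eta_W=\eta_{\mathrm{TV}}(P_{Y_W|Y_{\mathrm{pa}(W)}})$. Moreover, for every set of nodes $V$, $\eta_{\mathrm{TV}}(P_{V|X})\le\mathrm{perc}(V)$, where percolation uses removal probabilities $1-\eta_{\mathrm{TV}}(P_{Y_v|Y_{\mathrm{pa}(v)}})$. In particular, if all these node coefficients are $<1$ then $\eta_{\mathrm{TV}}(P_{V|X})<1$ for every $V$ not containing $X$.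
   Context: Bayesian network: finite directed acyclic graph whose vertices are random variables $Y_v$ on finite alphabets, each non-source vertex $v$ with a kernel $P_{Y_v|Y_{\mathrm{pa}(v)}}$ from its parents $\mathrm{pa}(v)$; a distinguished parentless source $X$; vertices topologically sorted ($v_1>v_2$ implies no directed path from $v_1$ to $v_2$). $P_{V|X}$ is the induced kernel from $X$ to $(Y_v)_{v\in V}$. Total variation $d_{\mathrm{TV}}(P,Q)=\sup_E|P(E)-Q(E)|$. Dobrushin coefficient: $\eta_{\mathrm{TV}}(K)=\sup_{x,x'}d_{\mathrm{TV}}(K(\cdot|x),K(\cdot|x'))$ (equivalently the supremum of $d_{\mathrm{TV}}(K\circ P,K\circ Q)/d_{\mathrm{TV}}(P,Q)$). Site percolation: each node $v\ne X$ independently removed with probability $1-\eta_v$ ($X$ never removed; parentless nodes other than $X$ are removed); $\mathrm{perc}(V)$ is the probability of a directed path of non-removed nodes from $X$ to some node in $V$. *)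

(* Defs.v *)
(* everything is finite, so suprema are finite maxima and
   percolation probabilities are finite sums over retained-node sets. *)
From HB Require Import structures.
From mathcomp Require Import all_boot all_order all_algebra.
Set Implicit Arguments. Unset Strict Implicit. Unset Printing Implicit Defensive.
Import Order.TTheory GRing.Theory Num.Theory.
Local Open Scope ring_scope.

Section BN.
Variable R : realFieldType.

Definition tv (T : finType) (P Q : T -> R) : R :=
  \big[Num.max/0]_(E : {set T}) `|\sum_(t in E) P t - \sum_(t in E) Q t|.

Definition dobrushin (S T : finType) (K : S -> T -> R) : R :=
  \big[Num.max/0]_(s : S) \big[Num.max/0]_(s' : S) tv (K s) (K s').

Variable n : nat.
Variable A : 'I_n -> finType.

Definition conf := {dffun forall v : 'I_n, A v}.
(* configurations restricted to a subset V of nodes (None outside V) *)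
Definition mconf := {dffun forall v : 'I_n, option (A v)}.

Definition proj (V : {set 'I_n}) (y : conf) : mconf :=
  @finfun _ (fun v => option (A v)) (fun v => if v \in V then Some (y v) else None).

Variable pa : 'I_n -> {set 'I_n}.
Variable X : 'I_n.
(* kernel of node v; K v y is the law of Y_v given the configuration y, and is
   required (in the theorem) to depend only on the parent coordinates of y *)
Variable K : forall v : 'I_n, conf -> A v -> R.

Definition joint (x : A X) (y : conf) : R :=
  (y X == x)%:R * \prod_(v : 'I_n | v != X) K y (y v).

Definition marg (V : {set 'I_n}) (x : A X) (z : mconf) : R :=
  \sum_(y : conf | proj V y == z) joint x y.

Definition eta_induced (V : {set 'I_n}) : R :=
  dobrushin (fun x : A X => marg V x).

Definition eta_node (v : 'I_n) : R := dobrushin (K (v := v)).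

Definition keep_prob (v : 'I_n) : R :=
  if pa v == set0 then 0 else eta_node v.

Definition ret_edge (s : {set 'I_n}) : rel 'I_n :=
  fun u w => [&& u \in s, w \in s & u \in pa w].

Definition perc (V : {set 'I_n}) : R :=
  \sum_(s : {set 'I_n} | (X \in s) && [exists v in V, connect (ret_edge s) X v])
     \prod_(v : 'I_n | v != X) (if v \in s then keep_prob v else 1 - keep_prob v).

End BN.

(* Main.v *)
Require Import Defs.
From HB Require Import structures.
From mathcomp Require Import all_boot all_order all_algebra.
From mathcomp Require Import lra ring.
Import Order.TTheory GRing.Theory Num.Theory.
Local Open Scope ring_scope.
Set Implicit Arguments. Unset Strict Implicit. Unset Printing Implicit Defensive.

Section Gen.
Variable R : realFieldType.

Lemma eqle (x y : R) : x = y -> x <= y.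
Proof. by move=> ->. Qed.

Lemma sum_ind1 (T : finType) (a : T) (F : T -> R) :
  \sum_z (a == z)%:R * F z = F a.
Proof.
rewrite (bigD1 a) //= eqxx mul1r big1 ?addr0 // => z za.
by rewrite eq_sym (negbTE za) mul0r.
Qed.

Lemma sum_ind1' (T : finType) (a : T) (F : T -> R) :
  \sum_z (z == a)%:R * F z = F a.
Proof. by rewrite -(sum_ind1 a); apply: eq_bigr => z _; rewrite eq_sym. Qed.

Lemma split_set (T : finType) (E : {set T}) (F : T -> R) :
  \sum_t F t = \sum_(t in E) F t + \sum_(t in ~: E) F t.
Proof.
rewrite (bigID (mem E)) /=; congr (_ + _); apply: eq_bigl => t.
by rewrite in_setC.
Qed.

Lemma tv_ge0 (T : finType) (P Q : T -> R) : 0 <= tv P Q.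
Proof. exact: bigmax_ge_id. Qed.

Lemma le_tv (T : finType) (P Q : T -> R) (E : {set T}) :
  `|\sum_(t in E) P t - \sum_(t in E) Q t| <= tv P Q.
Proof. rewrite /tv; exact: (le_bigmax _ (fun E => `|_ - _|) E). Qed.

Lemma tv_le (T : finType) (P Q : T -> R) c : 0 <= c ->
  (forall E : {set T}, `|\sum_(t in E) P t - \sum_(t in E) Q t| <= c) ->
  tv P Q <= c.
Proof. by move=> c0 H; apply: bigmax_le => // E _; apply: H. Qed.

Lemma tv_l1 (T : finType) (P Q : T -> R) : \sum_t P t = \sum_t Q t ->
  tv P Q *+ 2 = \sum_t `|P t - Q t|.
Proof.
move=> hs.
have hf : \sum_t (P t - Q t) = 0 by rewrite sumrB hs subrr.
have key : forall E : {set T}, `|\sum_(t in E) P t - \sum_(t in E) Q t| *+ 2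
    <= \sum_t `|P t - Q t|.
  move=> E; rewrite -sumrB.
  have hE : \sum_(t in E) (P t - Q t) = - \sum_(t in ~: E) (P t - Q t).
    by apply/eqP; rewrite -addr_eq0 -split_set hf.
  rewrite mulr2n {2}hE normrN (split_set E (fun t => `|P t - Q t|)).
  by apply: lerD; apply: ler_norm_sum.
apply/eqP; rewrite eq_le; apply/andP; split.
  set S := \sum_t `|P t - Q t|.
  have h0 : 0 <= S / 2%:R.
    by apply: divr_ge0; [apply: sumr_ge0 => t _ | rewrite ler0n].
  have : tv P Q <= S / 2%:R.
    by apply: tv_le => // E; rewrite ler_pdivlMr ?ltr0n // mulr_natr; apply: key.
  by rewrite ler_pdivlMr ?ltr0n // mulr_natr.
pose E0 := [set t | 0 <= P t - Q t].
apply: (le_trans _ (_ : `|\sum_(t in E0) P t - \sum_(t in E0) Q t| *+ 2 <= tv P Q *+ 2)); last first.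
  by rewrite lerMn2r /= le_tv.
rewrite -sumrB mulr2n.
have hE : \sum_(t in E0) (P t - Q t) = - \sum_(t in ~: E0) (P t - Q t).
  by apply/eqP; rewrite -addr_eq0 -split_set hf.
rewrite {2}hE normrN (split_set E0 (fun t => `|P t - Q t|)).
rewrite ger0_norm; last by apply: sumr_ge0 => t; rewrite inE.
rewrite ler0_norm; last first.
  by apply: sumr_le0 => t; rewrite !inE -ltNge => /ltW.
rewrite -sumrN; apply: lerD; apply: ler_sum => t; rewrite !inE.
  by move=> h; rewrite ger0_norm.
by rewrite -ltNge => h; rewrite ltr0_norm.
Qed.


Lemma sub_sum_le1 (T : finType) (P : T -> R) (E : {set T}) :
  (forall t, 0 <= P t) -> \sum_t P t = 1 -> 0 <= \sum_(t in E) P t <= 1.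
Proof.
move=> h0 h1; rewrite sumr_ge0 //=.
have := split_set E P; rewrite h1 => ->.
by rewrite lerDl sumr_ge0.
Qed.

Lemma tv_le1 (T : finType) (P Q : T -> R) :
  (forall t, 0 <= P t) -> \sum_t P t = 1 ->
  (forall t, 0 <= Q t) -> \sum_t Q t = 1 -> tv P Q <= 1.
Proof.
move=> hP0 hP1 hQ0 hQ1; apply: tv_le => // E.
move: (sub_sum_le1 E hP0 hP1) (sub_sum_le1 E hQ0 hQ1).
move=> /andP[? ?] /andP[? ?]; rewrite ler_norml; apply/andP; split; lra.
Qed.

Lemma sm_core (Z Aa : finType) (P N : Z -> R) (k : Z -> Aa -> R) eta :
  (forall z, 0 <= P z) -> (forall z, 0 <= N z) ->
  (forall z a, 0 <= k z a) -> (forall z, \sum_a k z a = 1) ->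
  (forall z z', tv (k z) (k z') <= eta) ->
  \sum_z N z <= \sum_z P z ->
  \sum_a `|\sum_z (P z - N z) * k z a| <=
     (\sum_z P z - \sum_z N z) + eta *+ 2 * \sum_z N z.
Proof.
move=> hP hN hk0 hk1 hkt hab.
set al := \sum_z P z; set be := \sum_z N z.
have al0 : 0 <= al by apply: sumr_ge0.
have be0 : 0 <= be by apply: sumr_ge0.
have [al_eq0|al_gt0] := eqVneq al 0.
  have P0 : forall z, P z = 0 by move=> z; apply: (psumr_eq0P _ al_eq0).
  have be_eq0 : be = 0 by apply/eqP; rewrite eq_le be0 andbT -al_eq0.
  have N0 : forall z, N z = 0 by move=> z; apply: (psumr_eq0P _ be_eq0).
  rewrite al_eq0 be_eq0 mulr0 subrr addr0 big1 // => a _.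
  by rewrite big1 ?normr0 // => z _; rewrite P0 N0 subrr mul0r.
have alp : 0 < al by rewrite lt_def al_gt0 al0.
have id : forall a, al * \sum_z (P z - N z) * k z a =
   \sum_z \sum_z' P z * N z' * (k z a - k z' a) + (al - be) * \sum_z P z * k z a.
  move=> a.
  have e1 : \sum_z \sum_z' P z * N z' * k z a = be * \sum_z P z * k z a.
    rewrite mulr_sumr; apply: eq_bigr => z _.
    rewrite /be mulr_suml; apply: eq_bigr => z' _; ring.
  have e2 : \sum_z \sum_z' P z * N z' * k z' a = al * \sum_z N z * k z a.
    rewrite exchange_big mulr_sumr; apply: eq_bigr => z' _.
    rewrite /al mulr_suml; apply: eq_bigr => z _; ring.
  have e3 : \sum_z \sum_z' P z * N z' * (k z a - k z' a) =
     be * \sum_z P z * k z a - al * \sum_z N z * k z a.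
    rewrite -e1 -e2 -sumrB; apply: eq_bigr => z _; rewrite -sumrB.
    by apply: eq_bigr => z' _; rewrite mulrBr.
  have e4 : \sum_z (P z - N z) * k z a = \sum_z P z * k z a - \sum_z N z * k z a.
    by rewrite -sumrB; apply: eq_bigr => z _; rewrite mulrBl.
  rewrite e3 e4; ring.
rewrite -(ler_pM2l alp) mulr_sumr.
apply: (le_trans (y := \sum_a (\sum_z \sum_z' P z * N z' * `|k z a - k z' a|
     + (al - be) * \sum_z P z * k z a))).
  apply: ler_sum => a _.
  rewrite -{1}(ger0_norm al0) -normrM id.
  apply: (le_trans (ler_normD _ _)); apply: lerD.
    apply: (le_trans (ler_norm_sum _ _ _)); apply: ler_sum => z _.
    apply: (le_trans (ler_norm_sum _ _ _)); apply: ler_sum => z' _.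
    by rewrite normrM ger0_norm // mulr_ge0.
  rewrite normrM ger0_norm ?subr_ge0 // ger0_norm //.
  by apply: sumr_ge0 => z _; rewrite mulr_ge0.
rewrite big_split /=.
have f1 : \sum_a \sum_z \sum_z' P z * N z' * `|k z a - k z' a| =
    \sum_z \sum_z' P z * N z' * (tv (k z) (k z') *+ 2).
  rewrite exchange_big; apply: eq_bigr => z _; rewrite exchange_big.
  apply: eq_bigr => z' _; rewrite -mulr_sumr tv_l1 // !hk1 //.
have f2 : \sum_a (al - be) * \sum_z P z * k z a = (al - be) * al.
  rewrite -mulr_sumr exchange_big /al; congr (_ * _); apply: eq_bigr => z _.
  by rewrite -mulr_sumr hk1 mulr1.
rewrite f1 f2.
apply: (le_trans (y := \sum_z \sum_z' P z * N z' * (eta *+ 2) + (al - be) * al)).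
  rewrite lerD2r; apply: ler_sum => z _; apply: ler_sum => z' _.
  by apply: ler_wpM2l; [rewrite mulr_ge0 | rewrite lerMn2r hkt orbT].
have f3 : \sum_z \sum_z' P z * N z' * (eta *+ 2) = al * be * (eta *+ 2).
  rewrite /al /be mulr_suml mulr_suml; apply: eq_bigr => z _.
  by rewrite mulr_sumr mulr_suml; apply: eq_bigr => z' _.
rewrite f3 -mulr_natr; rewrite le_eqVlt; apply/orP; left; apply/eqP; ring.
Qed.


Lemma regroup (Y Z Z' : finType) (mu : Y -> R) (f : Y -> Z) (g : Y -> Z')
  (r : Z' -> Z) : (forall y, f y = r (g y)) -> forall z,
  \sum_y (f y == z)%:R * mu y =
  \sum_z' (r z' == z)%:R * \sum_y (g y == z')%:R * mu y.
Proof.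
move=> hf z.
under [RHS]eq_bigr do rewrite mulr_sumr.
rewrite exchange_big; apply: eq_bigr => y _.
under eq_bigr do rewrite mulrCA.
by rewrite (sum_ind1 (g y) (fun z' => (r z' == z)%:R * mu y)) hf.
Qed.

Lemma coarse (Y Z Z' : finType) (mu : Y -> R) (f : Y -> Z) (g : Y -> Z')
  (r : Z' -> Z) : (forall y, f y = r (g y)) ->
  \sum_z `|\sum_y (f y == z)%:R * mu y| <= \sum_z' `|\sum_y (g y == z')%:R * mu y|.
Proof.
move=> hf.
apply: (le_trans (y := \sum_z \sum_z' (r z' == z)%:R * `|\sum_y (g y == z')%:R * mu y|)).
  apply: ler_sum => z _; rewrite (regroup mu hf).
  apply: (le_trans (ler_norm_sum _ _ _)); apply: ler_sum => z' _.
  by rewrite normrM ger0_norm ?ler0n.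
rewrite exchange_big; apply: ler_sum => z' _; idtac.
by rewrite (sum_ind1 (r z') (fun _ => `|\sum_y (g y == z')%:R * mu y|)).
Qed.

Lemma maxpm (x : R) : x = (if 0 <= x then x else 0) - (if 0 <= x then 0 else - x) /\
   `|x| = (if 0 <= x then x else 0) + (if 0 <= x then 0 else - x).
Proof.
case: ifP => x0; first by rewrite subr0 addr0 ger0_norm.
by rewrite sub0r opprK add0r ltr0_norm // ltNge x0.
Qed.

Lemma sm_ineq (Z Aa : finType) (nu : Z -> R) (k : Z -> Aa -> R) eta :
  (forall z a, 0 <= k z a) -> (forall z, \sum_a k z a = 1) ->
  (forall z z', tv (k z) (k z') <= eta) ->
  \sum_a `|\sum_z nu z * k z a| <=
     (1 - eta) * `|\sum_z nu z| + eta * \sum_z `|nu z|.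
Proof.
move=> hk0 hk1 hkt.
pose P z := if 0 <= nu z then nu z else 0.
pose N z := if 0 <= nu z then 0 else - nu z.
have hP : forall z, 0 <= P z by move=> z; rewrite /P; case: ifP.
have hN : forall z, 0 <= N z.
  by move=> z; rewrite /N; case: ifP => // h; rewrite oppr_ge0 ltW // ltNge h.
have enu : forall z, nu z = P z - N z by move=> z; case: (maxpm (nu z)).
have anu : forall z, `|nu z| = P z + N z by move=> z; case: (maxpm (nu z)).
rewrite (eq_bigr _ (fun z _ => anu z)) big_split /=.
rewrite (eq_bigr _ (fun z _ => enu z)) sumrB.
under eq_bigr do rewrite (eq_bigr _ (fun z _ => congr1 (fun t => t * k z _) (enu z))).
have [ba|ab] := leP (\sum_z N z) (\sum_z P z).
  apply: (le_trans (sm_core hP hN hk0 hk1 hkt ba)).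
  rewrite ger0_norm ?subr_ge0 // -mulr_natr.
  rewrite le_eqVlt; apply/orP; left; apply/eqP; ring.
have h := sm_core hN hP hk0 hk1 hkt (ltW ab).
have e : forall a, `|\sum_z (N z - P z) * k z a| = `|\sum_z (P z - N z) * k z a|.
  move=> a; rewrite -normrN -sumrN; congr `|_|; apply: eq_bigr => z _.
  by rewrite -mulNr opprB.
rewrite (eq_bigr _ (fun a _ => e a)) in h; apply: (le_trans h).
rewrite ler0_norm ?subr_le0 ?(ltW ab) // -mulr_natr.
rewrite le_eqVlt; apply/orP; left; apply/eqP; ring.
Qed.

Lemma al_ineq (Y Z1 Z2 Aa : finType) (mu : Y -> R) (p : Y -> Z1) (q : Y -> Z2)
  (r : Z2 -> Z1) (k : Z2 -> Aa -> R) eta :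
  (forall y, p y = r (q y)) ->
  (forall z a, 0 <= k z a) -> (forall z, \sum_a k z a = 1) ->
  (forall z z', tv (k z) (k z') <= eta) ->
  \sum_z1 \sum_a `|\sum_y (p y == z1)%:R * mu y * k (q y) a| <=
  (1 - eta) * \sum_z1 `|\sum_y (p y == z1)%:R * mu y|
  + eta * \sum_z2 `|\sum_y (q y == z2)%:R * mu y|.
Proof.
move=> hpq hk0 hk1 hkt.
pose nu z1 z2 := \sum_y (p y == z1)%:R * ((q y == z2)%:R * mu y).
have h1 : forall z1 a, \sum_y (p y == z1)%:R * mu y * k (q y) a =
    \sum_z2 nu z1 z2 * k z2 a.
  move=> z1 a; under [RHS]eq_bigr do rewrite mulr_suml.
  rewrite exchange_big; apply: eq_bigr => y _.
  rewrite -(sum_ind1 (q y) (fun z2 => (p y == z1)%:R * mu y * k z2 a)) /=.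
  by apply: eq_bigr => z2 _; ring.
have h2 : forall z1, \sum_y (p y == z1)%:R * mu y = \sum_z2 nu z1 z2.
  move=> z1; rewrite exchange_big; apply: eq_bigr => y _.
  rewrite -(sum_ind1 (q y) (fun z2 => (p y == z1)%:R * mu y)) /=.
  by apply: eq_bigr => z2 _; ring.
have h3 : forall z1 z2, nu z1 z2 = (r z2 == z1)%:R * \sum_y (q y == z2)%:R * mu y.
  move=> z1 z2; rewrite mulr_sumr; apply: eq_bigr => y _.
  have [qz|qz] := eqVneq (q y) z2; last by rewrite !(mul0r, mulr0).
  by rewrite hpq qz.
under eq_bigr do under eq_bigr do rewrite h1.
apply: (le_trans (y := \sum_z1 ((1 - eta) * `|\sum_z2 nu z1 z2| + eta * \sum_z2 `|nu z1 z2|))).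
  by apply: ler_sum => z1 _; apply: sm_ineq.
rewrite big_split /= -!mulr_sumr; apply: lerD.
  by apply: eqle; congr (_ * _); apply: eq_bigr => z1 _; rewrite h2.
apply: eqle; rewrite exchange_big; congr (_ * _); apply: eq_bigr => z2 _.
under eq_bigr do rewrite h3 normrM ger0_norm ?ler0n //.
by rewrite (sum_ind1 (r z2) (fun _ => `|\sum_y (q y == z2)%:R * mu y|)).
Qed.

End Gen.

Unset Implicit Arguments. Set Strict Implicit.

Section Net.
Variable R : realFieldType.
Variable n : nat.
Variable A : 'I_n -> finType.
Variable pa : 'I_n -> {set 'I_n}.
Variable X : 'I_n.
Variable K : forall v : 'I_n, conf A -> A v -> R.
Hypothesis hA : forall v, (0 < #|A v|)%N.
Hypothesis htop : forall u v, u \in pa v -> (u < v)%N.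
Hypothesis hX : pa X = set0.
Hypothesis hK0 : forall v, v != X -> forall y a, 0 <= K v y a.
Hypothesis hK1 : forall v, v != X -> forall y, \sum_(a : A v) K v y a = 1.
Hypothesis hKpa : forall v, v != X -> forall y y' : conf A,
            (forall u, u \in pa v -> y u = y' u) -> K v y = K v y'.


Definition upd (y : conf A) (v : 'I_n) (b : A v) : conf A :=
  @finfun _ (fun u => A u) (dfwith (fun u => y u) b).


Lemma upd_in y v b : upd y v b v = b.
Proof. by rewrite /upd ffunE dfwith_in. Qed.

Lemma upd_out y v b u : v != u -> upd y v b u = y u.
Proof. by move=> h; rewrite /upd ffunE dfwith_out. Qed.

Definition indep (F : conf A -> R) (v : 'I_n) := forall y b, F (upd y v b) = F y.

Definition dep (F : conf A -> R) (P : pred 'I_n) :=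
  forall y y' : conf A, (forall u, P u -> y u = y' u) -> F y = F y'.

Lemma dep_indep F (P : pred 'I_n) v : dep F P -> ~~ P v -> indep F v.
Proof.
move=> hF hv y b; apply: hF => u Pu; apply: upd_out.
by apply: contraNneq hv => ->.
Qed.


Lemma swap_ind (G : conf A -> R) v (a a' : A v) : indep G v ->
  \sum_y G y * (y v == a)%:R = \sum_y G y * (y v == a')%:R.
Proof.
move=> hG.
pose s (c : A v) := if c == a then a' else if c == a' then a else c.
have sE : forall c, (s c == a') = (c == a).
  by move=> c; rewrite /s; repeat case: eqP => //; congruence.
have ss : forall c, s (s c) = c.
  by move=> c; rewrite /s; repeat case: eqP => //; congruence.
pose tau y := upd y v (s (y v)).
have tt : forall y, tau (tau y) = y.
  move=> y; apply/ffunP => u; rewrite /tau.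
  have [e|uv] := eqVneq v u; first by subst u; rewrite !upd_in ss.
  by rewrite (upd_out _ _ _ _ uv) (upd_out _ _ _ _ uv).
rewrite [RHS](reindex_inj (can_inj tt)); apply: eq_bigr => y _.
by rewrite /tau hG upd_in sE.
Qed.


Lemma sum_out (F : conf A -> R) v (k : conf A -> A v -> R) (a0 : A v) :
  indep F v -> (forall b, indep (fun y => k y b) v) ->
  (forall y, \sum_b k y b = 1) ->
  \sum_y F y * k y (y v) = \sum_y F y * (y v == a0)%:R.
Proof.
move=> hF hk hk1.
transitivity (\sum_b \sum_y F y * k y b * (y v == b)%:R).
  rewrite exchange_big; apply: eq_bigr => y _.
  rewrite -(sum_ind1 (y v) (fun b => F y * k y b)) /=.
  by apply: eq_bigr => b _; ring.
transitivity (\sum_b \sum_y F y * k y b * (y v == a0)%:R).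
  apply: eq_bigr => b _; apply: swap_ind => y c /=.
  by rewrite hF hk.
rewrite exchange_big; apply: eq_bigr => y _.
by rewrite -mulr_suml -mulr_sumr hk1 mulr1.
Qed.


Definition d : conf A :=
  @finfun _ (fun v => A v) (fun v => xchoose (elimT (card_gt0P) (hA v))).

Definition w (m : nat) (y : conf A) : R :=
  \prod_(v : 'I_n | v != X)
     (if (m <= v)%N then (y v == d v)%:R else K v y (y v)).


Definition rest (v : 'I_n) (y : conf A) : R :=
  \prod_(u : 'I_n | (u != X) && (u != v))
     (if (v.+1 <= u)%N then (y u == d u)%:R else K u y (y u)).

Lemma leq_neq (v u : 'I_n) : u != v -> (v <= u)%N = (v.+1 <= u)%N.
Proof.
move=> uv; rewrite ltn_neqAle andbC; case: (v <= u)%N => //=.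
by rewrite eq_sym -(inj_eq val_inj) /= in uv; rewrite uv.
Qed.

Lemma wS v y : v != X -> w v.+1 y = K v y (y v) * rest v y.
Proof.
move=> vX; rewrite /w (bigD1 v) //= ltnn; congr (_ * _).
Qed.

Lemma w0 v y : v != X -> w v y = (y v == d v)%:R * rest v y.
Proof.
move=> vX; rewrite /w (bigD1 v) //= leqnn; congr (_ * _).
by apply: eq_bigr => u /andP[_ uv]; rewrite leq_neq.
Qed.

Lemma wX (m : nat) y : (X : nat) = m -> w m.+1 y = w m y.
Proof.
move=> Xm; apply: eq_bigr => u uX; congr (if _ then _ else _).
rewrite -Xm; apply/esym; apply: leq_neq; exact: uX.
Qed.

Lemma K_indep v b (u : 'I_n) : v != X -> (v <= u)%N -> indep (fun y => K v y b) u.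
Proof.
move=> vX uv y c /=; rewrite (hKpa v vX (upd y u c) y) // => t tp.
apply: upd_out; apply/eqP => ut; subst t.
by have := htop _ _ tp; rewrite ltnNge uv.
Qed.

Lemma rest_indep v : indep (rest v) v.
Proof.
move=> y b; rewrite /rest; apply: eq_bigr => u /andP[uX uv].
case: ifP => h.
  by rewrite upd_out // eq_sym.
have vu : (u < v)%N.
  by rewrite ltn_neqAle leqNgt (negbT h) andbT.
rewrite upd_out; last by rewrite eq_sym.
exact: (K_indep u (y u) v uX (ltnW vu) y b).
Qed.


Lemma dep_weaken F (P P' : pred 'I_n) : (forall u, P u -> P' u) -> dep F P -> dep F P'.
Proof. by move=> hP hF y y' h; apply: hF => u Pu; apply: h; apply: hP. Qed.

Lemma TL x : forall k m, (m + k = n)%N -> forall F, dep F (fun u : 'I_n => (u < m)%N) ->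
  \sum_y F y * joint K x y = \sum_y F y * (y X == x)%:R * w m y.
Proof.
elim=> [|k IH] m hmk F hF.
  rewrite addn0 in hmk; subst m; apply: eq_bigr => y _.
  rewrite /joint mulrA; congr (_ * _); apply: eq_bigr => v _.
  by rewrite leqNgt ltn_ord.
have hm : (m < n)%N by rewrite -hmk addnS ltnS leq_addr.
rewrite (IH m.+1); last 2 first.
- by rewrite addSnnS.
- by apply: (dep_weaken _ _ _ _ hF) => u /= h; apply: ltnW.
pose v := Ordinal hm.
have [vX|vX] := eqVneq v X.
  by apply: eq_bigr => y _; rewrite wX // -vX.
transitivity (\sum_y (F y * (y X == x)%:R * rest v y) * K v y (y v)).
  by apply: eq_bigr => y _; rewrite (wS v) //; ring.
rewrite (sum_out _ _ _ (d v)).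
- by apply: eq_bigr => y _; rewrite (w0 v) //; ring.
- move=> y b /=; rewrite rest_indep upd_out //.
  congr (_ * _ * _); apply: (dep_indep _ (fun u : 'I_n => (u < m)%N)) => //=.
  by rewrite ltnn.
- by move=> b; apply: K_indep.
- by apply: hK1.
Qed.


Lemma P1 (x : A X) : \sum_y joint K x y = 1.
Proof.
have := TL x n 0 (add0n n) (fun _ => 1) (fun _ _ _ => erefl).
under eq_bigr do rewrite mul1r.
move=> ->.
pose e := upd d X x.
transitivity (\sum_y (y == e)%:R * (1 : R)); last by rewrite sum_ind1'.
apply: eq_bigr => y _; rewrite mul1r mulr1.
have [->|ne] := eqVneq y e.
  rewrite /e upd_in eqxx mul1r /w; apply: big1 => v vX.
  by rewrite upd_out ?eqxx // eq_sym.
idtac.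
have : ~~ [forall v, y v == e v].
  apply: contra ne => /forallP h; apply/eqP/ffunP => v; apply/eqP; exact: h.
rewrite negb_forall => /existsP[v yv].
have [vX|vX] := eqVneq v X.
  subst v; move: yv; rewrite /e upd_in => /negbTE ->; by rewrite mul0r.
rewrite /w (bigD1 v) //=.
move: yv; rewrite /e upd_out 1?eq_sym // => /negbTE ->.
by rewrite mul0r mulr0.
Qed.

Lemma Lcore (x : A X) (W : 'I_n) (h : conf A -> R) (a : A W) : W != X ->
  dep h (fun u : 'I_n => (u < W)%N) ->
  \sum_y (h y * (y W == a)%:R) * joint K x y = \sum_y (h y * K W y a) * joint K x y.
Proof.
move=> WX hh.
rewrite (TL x (n - W.+1) W.+1); last 2 first.
- by rewrite subnKC.
- move=> y y' hy; rewrite (hh y y'); last by move=> u /= hu; apply: hy; apply: ltnW.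
  by rewrite hy.
rewrite (TL x (n - W) W); last 2 first.
- by rewrite subnKC // ltnW.
- move=> y y' hy; rewrite (hh y y') // (hKpa W WX y y') // => u /htop; exact: hy.
transitivity (\sum_y (h y * K W y a * (y X == x)%:R * rest W y) * (y W == a)%:R).
  apply: eq_bigr => y _; rewrite (wS W) //.
  have [ya|ya] := eqVneq (y W) a; last by rewrite !(mulr0, mul0r).
  by rewrite ya; ring.
rewrite (swap_ind _ W a (d W)).
  by apply: eq_bigr => y _; rewrite (w0 W) //; ring.
move=> y b; rewrite rest_indep upd_out //.
rewrite (dep_indep h (fun u : 'I_n => (u < W)%N) W hh) ?ltnn //.
by rewrite (K_indep W a W WX (leqnn _) y b).
Qed.


Definition mupd (z : mconf A) (v : 'I_n) (o : option (A v)) : mconf A :=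
  @finfun _ (fun u => option (A u)) (dfwith (fun u => z u) o).
Definition restr (V : {set 'I_n}) (z : mconf A) : mconf A :=
  @finfun _ (fun u => option (A u)) (fun u => if u \in V then z u else None).
Definition ext (z : mconf A) : conf A :=
  @finfun _ (fun u => A u) (fun u => odflt (d u) (z u)).

Lemma proj_WV (W : 'I_n) V y : proj (W |: V) y = mupd (proj V y) W (Some (y W)).
Proof.
apply/ffunP => u; rewrite /mupd /proj !ffunE.
have [e|uW] := eqVneq W u.
  by subst u; rewrite dfwith_in setU11.
by rewrite dfwith_out // ffunE in_setU1 eq_sym (negbTE uW).
Qed.

Lemma proj_restr (V T : {set 'I_n}) y : V \subset T -> proj V y = restr V (proj T y).
Proof.
move=> VT; apply/ffunP => u; rewrite /restr /proj !ffunE.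
by case: ifP => // uV; rewrite (subsetP VT u uV).
Qed.

Lemma K_ext (W : 'I_n) (T : {set 'I_n}) y : W != X -> pa W \subset T ->
  K W y = K W (ext (proj T y)).
Proof.
move=> WX pT; apply: hKpa => // u up.
by rewrite /ext /proj !ffunE (subsetP pT u up).
Qed.

Lemma margE (S : {set 'I_n}) (x : A X) z :
  marg K S x z = \sum_y (proj S y == z)%:R * joint K x y.
Proof. by rewrite /marg big_mkcond; apply: eq_bigr => y _; case: eqP; rewrite ?mul1r ?mul0r. Qed.

Lemma marg_sum (S : {set 'I_n}) (x : A X) : \sum_z marg K S x z = 1.
Proof.
under eq_bigr do rewrite margE.
rewrite exchange_big -[RHS](P1 x); apply: eq_bigr => y _.
exact: (sum_ind1 (proj S y) (fun _ => joint K x y)).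
Qed.

Definition NN (S : {set 'I_n}) (x x' : A X) : R :=
  \sum_z `|\sum_y (proj S y == z)%:R * (joint K x y - joint K x' y)|.

Lemma tv_marg (S : {set 'I_n}) (x x' : A X) :
  tv (marg K S x) (marg K S x') *+ 2 = NN S x x'.
Proof.
rewrite tv_l1 ?marg_sum //; apply: eq_bigr => z _; rewrite !margE -sumrB.
by congr `|_|; apply: eq_bigr => y _; rewrite mulrBr.
Qed.

Lemma le_dob (S T : finType) (F : S -> T -> R) s s' : tv (F s) (F s') <= dobrushin F.
Proof.
rewrite /dobrushin; apply: le_trans (le_bigmax _ _ s).
exact: (le_bigmax _ (fun s' => tv (F s) (F s')) s').
Qed.

Lemma dob_le (S T : finType) (F : S -> T -> R) c : 0 <= c ->
  (forall s s', tv (F s) (F s') <= c) -> dobrushin F <= c.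
Proof.
by move=> c0 h; apply: bigmax_le => // s _; apply: bigmax_le => // s' _.
Qed.

Lemma dob_ge0 (S T : finType) (F : S -> T -> R) : 0 <= dobrushin F.
Proof. exact: bigmax_ge_id. Qed.

Lemma natr_and (b c : bool) : ((b && c)%:R : R) = b%:R * c%:R.
Proof. by case: b; case: c; rewrite ?mul1r ?mul0r. Qed.

Lemma eta_node_le1 (W : 'I_n) : W != X -> eta_node K W <= 1.
Proof.
move=> WX; apply: dob_le => // s s'; apply: tv_le1 => //; try exact: hK0; exact: hK1.
Qed.

Lemma NN_ineq (W : 'I_n) (V : {set 'I_n}) (x x' : A X) :
  W != X -> (forall v, v \in V -> (v < W)%N) ->
  NN (W |: V) x x' <= (1 - eta_node K W) * NN V x x'
                     + eta_node K W * NN (V :|: pa W) x x'.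
Proof.
move=> WX VW; set T := V :|: pa W.
pose mu y := joint K x y - joint K x' y.
pose k (z : mconf A) (a : A W) := K W (ext z) a.
have h1 := @coarse R _ _ _ mu (proj (W |: V)) (fun y => (proj V y, y W))
   (fun p => mupd p.1 W (Some p.2)) (proj_WV W V).
apply: (le_trans h1).
have e2 : forall (z1 : mconf A) (a : A W),
    \sum_y ((proj V y, y W) == (z1, a))%:R * mu y =
    \sum_y (proj V y == z1)%:R * mu y * k (proj T y) a.
  move=> z1 a.
  have hdep : dep (fun y => (proj V y == z1)%:R) (fun u : 'I_n => (u < W)%N).
    move=> y y' hy; congr ((_ == _)%:R); apply/ffunP => u; rewrite /proj !ffunE.
    by case: ifP => // uV; rewrite hy // VW.
  transitivity (\sum_y ((proj V y == z1)%:R * (y W == a)%:R) * joint K x y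
              - \sum_y ((proj V y == z1)%:R * (y W == a)%:R) * joint K x' y).
    by rewrite -sumrB; apply: eq_bigr => y _; rewrite xpair_eqE natr_and mulrBr.
  rewrite !Lcore // -sumrB; apply: eq_bigr => y _.
  rewrite /k -(K_ext W T y WX); last exact: subsetUr.
  by rewrite /mu; ring.
rewrite -(pair_big xpredT xpredT (fun z1 a =>
   `|\sum_y ((proj V y, y W) == (z1, a))%:R * mu y|)) /=.
under eq_bigr do under eq_bigr do rewrite e2.
apply: (al_ineq mu (p := fun y => proj V y) (q := fun y => proj T y) (r := restr V)).
- by move=> y; apply: proj_restr; apply: subsetUl.
- by move=> z a; apply: hK0.
- by move=> z; apply: hK1.
- by move=> z z'; rewrite /eta_node /k; apply: le_dob.
Qed.


Lemma part1 (W : 'I_n) (V : {set 'I_n}) :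
  W != X -> (forall v, v \in V -> (v < W)%N) ->
  eta_induced X K (W |: V) <=
    (1 - eta_node K W) * eta_induced X K V
    + eta_node K W * eta_induced X K (V :|: pa W).
Proof.
move=> WX VW.
have e0 : 0 <= eta_node K W by apply: dob_ge0.
have e1 : 0 <= 1 - eta_node K W by rewrite subr_ge0 eta_node_le1.
apply: dob_le; first by rewrite addr_ge0 // mulr_ge0 // dob_ge0.
move=> x x'.
apply: (le_trans (y := (1 - eta_node K W) * tv (marg K V x) (marg K V x')
   + eta_node K W * tv (marg K (V :|: pa W) x) (marg K (V :|: pa W) x'))).
  have h := NN_ineq W V x x' WX VW.
  by rewrite -!tv_marg !mulrnAr -mulrnDl lerMn2r in h.
apply: lerD; apply: ler_wpM2l => //;
  exact: (le_dob _ _ (fun x => marg K _ x)).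
Qed.


Lemma ret_mono (s t : {set 'I_n}) x y : s \subset t ->
  connect (ret_edge pa s) x y -> connect (ret_edge pa t) x y.
Proof.
move=> st; apply: connect_sub => u v /and3P[us vs uv]; apply: connect1.
by rewrite /ret_edge (subsetP st u us) (subsetP st v vs) uv.
Qed.

Lemma connect_mem (s : {set 'I_n}) x y : x \in s ->
  connect (ret_edge pa s) x y -> y \in s.
Proof.
move=> xs /connectP[p]; elim: p x xs => [|z p IH] x xs /=; first by move=> _ ->.
by move=> /andP[/and3P[_ zs _] hp] hy; apply: (IH z zs hp hy).
Qed.

Lemma path_le_last (t : {set 'I_n}) x p : path (ret_edge pa t) x p -> (x <= last x p)%N.
Proof.
elim: p x => [|z p IH] x //= /andP[/and3P[_ _ xz] hp].
exact: leq_trans (ltnW (htop _ _ xz)) (IH z hp).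
Qed.

Lemma connect_drop (s : {set 'I_n}) (W v : 'I_n) : W \notin s -> X \in s ->
  (v < W)%N -> connect (ret_edge pa (W |: s)) X v -> connect (ret_edge pa s) X v.
Proof.
move=> Ws Xs vW /connectP[p hp hv]; apply/connectP; exists p => //.
elim: p X Xs hp hv => [|z p IH] x xs //= /andP[/and3P[_ zs xz] hp] hv.
have zW : (z < W)%N.
  by apply: leq_ltn_trans (path_le_last _ _ _ hp) _; rewrite -hv.
have zs' : z \in s.
  move: zs; rewrite in_setU1 => /orP[/eqP zW'|//].
  by move: zW; rewrite zW' ltnn.
by rewrite /ret_edge xs zs' xz /= (IH z zs' hp hv).
Qed.

Lemma connect_X0 (v : 'I_n) : connect (ret_edge pa [set X]) X v -> v = X.
Proof.
move=> /connectP[[|z p] hp hv] //=.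
move: hp => /= /andP[/and3P[_ zs xz] _].
move: zs; rewrite in_set1 => /eqP zX; subst z.
by move: xz; rewrite hX in_set0.
Qed.


Definition kp (v : 'I_n) : R := keep_prob pa K v.
Definition om (s : {set 'I_n}) : R :=
  \prod_(v : 'I_n | v != X) (if v \in s then kp v else 1 - kp v).
Definition om' (W : 'I_n) (s : {set 'I_n}) : R :=
  \prod_(v : 'I_n | (v != X) && (v != W)) (if v \in s then kp v else 1 - kp v).
Definition Ev (U s : {set 'I_n}) : bool :=
  (X \in s) && [exists v in U, connect (ret_edge pa s) X v].

Lemma kp_bounds v : v != X -> 0 <= kp v <= 1.
Proof.
move=> vX; rewrite /kp /keep_prob; case: ifP => _; first by rewrite lexx ler01.
by rewrite dob_ge0 eta_node_le1.
Qed.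

Lemma om_ge0 s : 0 <= om s.
Proof.
apply: prodr_ge0 => v vX; have /andP[h0 h1] := kp_bounds v vX.
by case: ifP => _ //; rewrite subr_ge0.
Qed.

Lemma om'_ge0 W s : 0 <= om' W s.
Proof.
apply: prodr_ge0 => v /andP[vX _]; have /andP[h0 h1] := kp_bounds v vX.
by case: ifP => _ //; rewrite subr_ge0.
Qed.

Lemma om'_U W s : om' W (W |: s) = om' W s.
Proof.
apply: eq_bigr => v /andP[_ vW]; by rewrite in_setU1 (negbTE vW).
Qed.

Lemma omU W s : W != X -> om (W |: s) = kp W * om' W s.
Proof. by move=> WX; rewrite /om (bigD1 W) //= setU11; congr (_ * _); exact: om'_U. Qed.

Lemma omN W (s : {set 'I_n}) : W != X -> W \notin s -> om s = (1 - kp W) * om' W s.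
Proof. by move=> WX Ws; rewrite /om (bigD1 W) //= (negbTE Ws). Qed.

Lemma split_sets (W : 'I_n) (F : {set 'I_n} -> R) :
  \sum_s F s = \sum_(s : {set 'I_n} | W \notin s) (F s + F (W |: s)).
Proof.
rewrite (bigID (fun s : {set 'I_n} => W \notin s)) big_split /=; congr (_ + _).
rewrite (reindex_onto (fun s => W |: s) (fun s => s :\ W)) /=.
  apply: eq_bigl => s; rewrite setU11 /=.
  apply/eqP/idP => [<-|Ws]; first by rewrite setD11.
  by rewrite setU1K.
by move=> s; rewrite negbK => Ws; rewrite setD1K.
Qed.

Lemma percE U : perc pa X K U = \sum_s (Ev U s)%:R * om s.
Proof.
rewrite /perc big_mkcond; apply: eq_bigr => s _.
by rewrite /Ev /om; case: ifP; rewrite ?mul1r ?mul0r.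
Qed.


Lemma bool_ineq (k : R) (e1 e2 e3 e4 f1 f2 : bool) : 0 <= k <= 1 ->
  (e1 -> f1) -> (e2 -> f1) -> (e3 -> f2) -> (e4 -> f2) ->
  (1 - k) * ((1 - k) * e1%:R + k * e2%:R) + k * ((1 - k) * e3%:R + k * e4%:R)
    <= (1 - k) * f1%:R + k * f2%:R.
Proof.
move=> /andP[k0 k1].
case: f1; case: f2; case: e1; case: e2; case: e3; case: e4 => //= *; nra.
Qed.


Lemma percS (W : 'I_n) U : W != X -> perc pa X K U =
  \sum_(s : {set 'I_n} | W \notin s) om' W s *
     ((1 - kp W) * (Ev U s)%:R + kp W * (Ev U (W |: s))%:R).
Proof.
move=> WX; rewrite percE (split_sets W); apply: eq_bigr => s Ws.
rewrite (omN W s WX Ws) (omU W s WX); ring.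
Qed.

Lemma perc_step (W : 'I_n) (V : {set 'I_n}) : W != X -> W \in V ->
  (forall v, v \in V :\ W -> (v < W)%N) ->
  (1 - kp W) * perc pa X K (V :\ W) + kp W * perc pa X K ((V :\ W) :|: pa W)
    <= perc pa X K V.
Proof.
move=> WX WV VW.
rewrite !(percS W _ WX) !mulr_sumr -big_split /=; apply: ler_sum => s Ws.
have e : forall a b c e f : R, a * (b * c) + e * (b * f) = b * (a * c + e * f).
  by move=> *; ring.
rewrite (e (1 - kp W) (om' W s)); apply: ler_wpM2l; first exact: om'_ge0.
have XW : X != W by rewrite eq_sym.
apply: bool_ineq; first exact: kp_bounds W WX.
- move=> /andP[Xs /existsP[v /andP[vV c]]]; rewrite /Ev Xs /=.
  by apply/existsP; exists v; rewrite c andbT; move: vV; rewrite in_setD1 => /andP[].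
- move=> /andP[Xs /existsP[v /andP[vV c]]].
  have Xs' : X \in s by move: Xs; rewrite in_setU1 (negbTE XW).
  rewrite /Ev Xs' /=; apply/existsP; exists v.
  rewrite (connect_drop s W v Ws Xs' (VW v vV) c) andbT.
  by move: vV; rewrite in_setD1 => /andP[].
- move=> /andP[Xs /existsP[v /andP[vV c]]].
  rewrite /Ev setU1r //=; apply/existsP.
  move: vV; rewrite in_setU => /orP[vV|vp].
    exists v; rewrite (ret_mono _ _ _ _ (subsetUr [set W] s) c) andbT.
    by move: vV; rewrite in_setD1 => /andP[].
  exists W; rewrite WV /=.
  apply: (connect_trans (ret_mono _ _ _ _ (subsetUr [set W] s) c)); apply: connect1.
  by rewrite /ret_edge setU11 vp setU1r ?andbT // (connect_mem _ _ _ Xs c).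
- move=> /andP[Xs /existsP[v /andP[vV c]]].
  rewrite /Ev Xs /=; apply/existsP.
  move: vV; rewrite in_setU => /orP[vV|vp].
    exists v; rewrite c andbT.
    by move: vV; rewrite in_setD1 => /andP[].
  exists W; rewrite WV /=.
  apply: (connect_trans c); apply: connect1.
  by rewrite /ret_edge setU11 vp (connect_mem _ _ _ Xs c).
Qed.


Lemma perc_total : \sum_(s : {set 'I_n}) (X \in s)%:R * om s = 1.
Proof.
pose F (i : 'I_n) (b : bool) : R :=
  if i == X then b%:R else (if b then kp i else 1 - kp i).
have h1 : \prod_i \sum_b F i b = 1.
  apply: big1 => i _; rewrite big_bool /F; case: (i == X) => /=; ring.
rewrite bigA_distr_bigA in h1; apply: (etrans _ h1).
rewrite (reindex (fun f : {ffun 'I_n -> bool} => [set i | f i])); last first.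
  apply: onW_bij; exists (fun s : {set 'I_n} => [ffun i => i \in s]).
    by move=> f; apply/ffunP => i; rewrite ffunE inE.
  by move=> s; apply/setP => i; rewrite inE ffunE.
apply: eq_bigr => f _; rewrite [RHS](bigD1 X) //= /F eqxx inE.
congr (_ * _); apply: eq_bigr => i iX; by rewrite (negbTE iX) inE.
Qed.

Lemma joint_ge0 (x : A X) y : 0 <= joint K x y.
Proof.
by rewrite /joint mulr_ge0 ?ler0n // prodr_ge0 // => v vX; apply: hK0.
Qed.

Lemma marg_ge0 S (x : A X) z : 0 <= marg K S x z.
Proof. by apply: sumr_ge0 => y _; apply: joint_ge0. Qed.

Lemma eta_ind_le1 V : eta_induced X K V <= 1.
Proof.
apply: dob_le => // x x'; apply: tv_le1; try exact: marg_ge0; exact: marg_sum.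
Qed.

Lemma perc_ge0 V : 0 <= perc pa X K V.
Proof. by rewrite percE; apply: sumr_ge0 => s _; rewrite mulr_ge0 ?ler0n ?om_ge0. Qed.

Lemma eta_ind0 : eta_induced X K set0 <= 0.
Proof.
apply: dob_le => // x x'; apply: tv_le => // E.
have e : forall x0 : A X, \sum_(t in E) marg K set0 x0 t = \sum_(t in E) (proj set0 d == t)%:R.
  move=> x0; apply: eq_bigr => z _; rewrite margE.
  have pe : forall y, proj set0 y = proj set0 d.
    by move=> y; apply/ffunP => u; rewrite /proj !ffunE in_set0.
  under eq_bigr do rewrite pe.
  by rewrite -mulr_sumr P1 mulr1.
by rewrite !e subrr normr0.
Qed.

Lemma part2 : forall b (V : {set 'I_n}), (forall v, v \in V -> (v < b)%N) ->
  eta_induced X K V <= perc pa X K V.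
Proof.
elim=> [|b IH] V hV.
  have -> : V = set0.
    by apply/setP => v; rewrite in_set0; apply/negbTE/negP => /hV.
  exact: le_trans eta_ind0 (perc_ge0 _).
have [bn|bn] := ltnP b n; last first.
  apply: IH => v /hV vb; exact: leq_trans (ltn_ord v) bn.
pose W := Ordinal bn.
have [WV|WV] := boolP (W \in V); last first.
  apply: IH => v vV; have := hV v vV; rewrite ltnS leq_eqVlt => /orP[/eqP e|//].
  have vW : v = W by apply: val_inj.
  by move: WV; rewrite -vW vV.
have [WX|WX] := eqVneq W X.
  apply: (le_trans (eta_ind_le1 V)); rewrite percE -[L in L <= _]perc_total.
  apply: eqle; apply: eq_bigr => s _; congr (_%:R * _).
  rewrite /Ev; case Xs : (X \in s) => //=.
  suff -> : [exists v in V, connect (ret_edge pa s) X v] by [].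
  by apply/existsP; exists X; rewrite -WX WV connect0.
set V' := V :\ W.
have VW : forall v, v \in V' -> (v < W)%N.
  move=> v; rewrite in_setD1 => /andP[vW vV]; have := hV v vV.
  rewrite ltnS leq_eqVlt => /orP[/eqP e|//].
  have vW' : v = W by apply: val_inj.
  by move: vW; rewrite vW' eqxx.
have VT : forall v, v \in V' :|: pa W -> (v < b)%N.
  by move=> v; rewrite in_setU => /orP[/VW //|/htop].
have eV : V = W |: V' by rewrite setD1K.
have h := part1 W V' WX VW; rewrite -eV in h.
apply: (le_trans h).
have e0 : 0 <= eta_node K W by apply: dob_ge0.
have e1 : 0 <= 1 - eta_node K W by rewrite subr_ge0 eta_node_le1.
apply: (le_trans (y := (1 - eta_node K W) * perc pa X K V'
                       + eta_node K W * perc pa X K (V' :|: pa W))).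
  apply: lerD; apply: ler_wpM2l => //; apply: IH.
    exact: VW.
  exact: VT.
apply: le_trans (perc_step W V WX WV VW).
rewrite /kp /keep_prob; case: ifP => [/eqP pW|_] //.
rewrite pW setU0 mul0r addr0 subr0 mul1r; apply: eqle; ring.
Qed.


Lemma perc_lt1 (V : {set 'I_n}) : X \notin V -> (forall v, v != X -> eta_node K v < 1) ->
  perc pa X K V < 1.
Proof.
move=> XV hlt.
pose D := \sum_(s : {set 'I_n}) ((X \in s)%:R - (Ev V s)%:R) * om s.
have e : perc pa X K V + D = 1.
  rewrite percE /D -big_split /= -[RHS]perc_total; apply: eq_bigr => s _; ring.
have EX : Ev V [set X] = false.
  rewrite /Ev set11 /=; apply/negbTE/existsP => -[v /andP[vV c]].
  by move: vV; rewrite (connect_X0 v c) (negbTE XV).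
have om0 : 0 < om [set X].
  apply: prodr_gt0 => v vX; rewrite in_set1 (negbTE vX) subr_gt0.
  rewrite /kp /keep_prob; case: ifP => _; [exact: ltr01 | exact: hlt].
have D0 : 0 < D.
  rewrite /D (bigD1 [set X]) //= set11 EX subr0 mul1r.
  apply: ltr_pwDl => //; apply: sumr_ge0 => s _; apply: mulr_ge0; last exact: om_ge0.
  by rewrite /Ev; case: (X \in s); case: [exists _ in _, _]; rewrite ?subrr ?subr0.
by rewrite -e ltrDl.
Qed.

Lemma main :
  (forall (W : 'I_n) (V : {set 'I_n}),
      W \notin V -> W != X -> (forall v, v \in V -> (v < W)%N) ->
      eta_induced X K (W |: V) <=
        (1 - eta_node K W) * eta_induced X K V
        + eta_node K W * eta_induced X K (V :|: pa W))
  /\ (forall V : {set 'I_n}, eta_induced X K V <= perc pa X K V)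
  /\ ((forall v, v != X -> eta_node K v < 1) ->
      forall V : {set 'I_n}, X \notin V -> eta_induced X K V < 1).
Proof.
have p2 : forall V : {set 'I_n}, eta_induced X K V <= perc pa X K V.
  by move=> V; apply: (part2 n) => v _; exact: ltn_ord.
split; first by move=> W V _ WX VW; apply: part1.
split => // hlt V XV.
exact: le_lt_trans (p2 V) (perc_lt1 V XV hlt).
Qed.

End Net.
Theorem theorem6 (R : realFieldType) (n : nat) (A : 'I_n -> finType)
  (pa : 'I_n -> {set 'I_n}) (X : 'I_n)
  (K : forall v : 'I_n, conf A -> A v -> R)
  (* finite nonempty alphabets *)
  (hA : forall v, (0 < #|A v|)%N)
  (* topological sort: parents have smaller index *)
  (htop : forall u v, u \in pa v -> (u < v)%N)
  (* X is parentless *)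
  (hX : pa X = set0)
  (* kernels are probability kernels for non-source nodes *)
  (hK0 : forall v, v != X -> forall y a, 0 <= K v y a)
  (hK1 : forall v, v != X -> forall y, \sum_(a : A v) K v y a = 1)
  (* kernel of v depends only on the parents of v *)
  (hKpa : forall v, v != X -> forall y y' : conf A,
            (forall u, u \in pa v -> y u = y' u) -> K v y = K v y') :
  (forall (W : 'I_n) (V : {set 'I_n}),
      W \notin V -> W != X -> (forall v, v \in V -> (v < W)%N) ->
      eta_induced X K (W |: V) <=
        (1 - eta_node K W) * eta_induced X K V
        + eta_node K W * eta_induced X K (V :|: pa W))
  /\ (forall V : {set 'I_n}, eta_induced X K V <= perc pa X K V)
  /\ ((forall v, v != X -> eta_node K v < 1) ->
      forall V : {set 'I_n}, X \notin V -> eta_induced X K V < 1).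
Proof. by move=> *; apply: main. Qed.
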